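(* Let $q$ be a non-negative integer and $\Lambda$ a unital commutative ring which is $q$-torsion-free. Let $\mathfrak f$ be a free Lie algebra over $\Lambda$ and $\xi^{\wedge}\colon\mathfrak f\wedge^q\mathfrak f\to\mathfrak f$ the homomorphism with $\xi^{\wedge}(x\wedge y)=[x,y]$ and $\xi^{\wedge}(\{x\})=qx$. Then $\xi^{\wedge}$ induces an isomorphism $\mathfrak f\curlywedge^q\mathfrak f\cong[\mathfrak f,\mathfrak f]$.
   Context: All Lie algebras are over $\Lambda$. For $q\ge1$, the non-abelian $q$-exterior square $\mathfrak g\wedge^q\mathfrak g$ is the Lie algebra generated by symbols $h\wedge g$ and $\{h\}$ ($h,g\in\mathfrak g$) subject to, for all $h,h',g,g'\in\mathfrak g$, $\lambda,\lambda'\in\Lambda$: (1) $\lambda(h\wedge g)=\lambda h\wedge g=h\wedge\lambda g$; (2),(3) additivity in each variable; (4) $[h,h']\wedge g=h\wedge[h',g]-h'\wedge[h,g]$; (5) $h\wedge[g,g']=[g',h]\wedge g-[g,h]\wedge g'$; (6) $[h\wedge g,h'\wedge g']=[h,g]\wedge[h',g']$; (7) $[\{h'\},h\wedge g]=[qh',h]\wedge g+h\wedge[qh',g]$; (8) $\{\lambda h+\lambda'h'\}=\lambda\{h\}+\lambda'\{h'\}$; (9) $[\{h\},\{h'\}]=qh\wedge qh'$; (10) $\{[h,g]\}=q(h\wedge g)$; (11) $h\wedge h=0$. For $q=0$, generated by the $h\wedge g$ subject to (1)–(6) and (11) (Ellis's exterior square $\mathfrak g\wedge\mathfrak g$, also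 defined this way for every $q$). $\mathfrak g\curlywedge^q\mathfrak g$ denotes the image of the natural homomorphism $\mathfrak g\wedge\mathfrak g\to\mathfrak g\wedge^q\mathfrak g$, $h\wedge g\mapsto h\wedge g$. *)

(* Defs.v *)
From HB Require Import structures.
From mathcomp Require Import all_boot all_order all_algebra.
Set Implicit Arguments. Unset Strict Implicit. Unset Printing Implicit Defensive.
Import GRing.Theory.
Local Open Scope ring_scope.

Record lieAlgebra (R : comPzRingType) := LieAlgebra {
  lie_mod :> lmodType R;
  lie_br : lie_mod -> lie_mod -> lie_mod;
  lie_brl : forall (a : R) (x y z : lie_mod),
      lie_br (a *: x + y) z = a *: lie_br x z + lie_br y z;
  lie_brr : forall (a : R) (x y z : lie_mod),
      lie_br z (a *: x + y) = a *: lie_br z x + lie_br z y;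
  lie_alt : forall x : lie_mod, lie_br x x = 0;
  lie_jacobi : forall x y z : lie_mod,
      lie_br x (lie_br y z) + lie_br y (lie_br z x) + lie_br z (lie_br x y) = 0
}.
Arguments lie_br {R} l x y.
Notation "[: x , y :]" := (lie_br _ x y) (format "[: x ,  y :]").

Section Defs.
Variable R : comPzRingType.

Definition is_lie_hom (L M : lieAlgebra R) (f : L -> M) : Prop :=
  (forall (a : R) (x y : L), f (a *: x + y) = a *: f x + f y) /\
  (forall x y : L, f [: x, y :] = [: f x, f y :]).

(* The derived subalgebra [L, L] : the R-span of all brackets
   (finite sums of brackets; R-multiples are absorbed since a[x,y] = [ax,y]). *)
Definition in_derived (L : lieAlgebra R) (z : L) : Prop :=
  exists s : seq (L * L), z = \sum_(p <- s) [: p.1, p.2 :].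

Definition is_free_lie (X : Type) (L : lieAlgebra R) (i : X -> L) : Prop :=
  forall (M : lieAlgebra R) (g : X -> M),
    (exists phi : L -> M, is_lie_hom phi /\ forall x, phi (i x) = g x) /\
    (forall phi psi : L -> M, is_lie_hom phi -> is_lie_hom psi ->
       (forall x, phi (i x) = psi (i x)) -> forall z, phi z = psi z).

(* Relations (1)-(6) and (11) for symbols h /\ g in M. *)
Definition wedge_rels (g M : lieAlgebra R) (w : g -> g -> M) : Prop :=
  (forall (a : R) h k, a *: w h k = w (a *: h) k /\ a *: w h k = w h (a *: k)) /\
        (forall h h' k, w (h + h') k = w h k + w h' k) /\
        (forall h k k', w h (k + k') = w h k + w h k') /\
        (forall h h' k, w [: h, h' :] k = w h [: h', k :] - w h' [: h, k :]) /\
        (forall h k k', w h [: k, k' :] = w [: k', h :] k - w [: k, h :] k') /\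
        (forall h k h' k', [: w h k, w h' k' :] = w [: h, k :] [: h', k' :])
    /\ (forall h, w h h = 0).

Definition q_rels (q : nat) (g M : lieAlgebra R) (w : g -> g -> M) (c : g -> M)
  : Prop :=
  [/\ (forall h' h k, [: c h', w h k :] = w [: h' *+ q, h :] k + w h [: h' *+ q, k :]),
      (forall (a a' : R) h h', c (a *: h + a' *: h') = a *: c h + a' *: c h'),
      (forall h h', [: c h, c h' :] = w (h *+ q) (h' *+ q))
    & (forall h k, c [: h, k :] = (w h k) *+ q)].

Definition is_ext_square (g W : lieAlgebra R) (w : g -> g -> W) : Prop :=
  wedge_rels w /\
  forall (M : lieAlgebra R) (w' : g -> g -> M), wedge_rels w' ->
    (exists phi : W -> M, is_lie_hom phi /\ forall h k, phi (w h k) = w' h k) /\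
    (forall phi psi : W -> M, is_lie_hom phi -> is_lie_hom psi ->
       (forall h k, phi (w h k) = psi (w h k)) -> forall z, phi z = psi z).

(* (W, w, c) is the non-abelian q-exterior square of g (w h k = h /\ k,
   c h = {h}).  For q = 0 it is Ellis's exterior square (c is irrelevant). *)
Definition is_qext_square (q : nat) (g W : lieAlgebra R)
    (w : g -> g -> W) (c : g -> W) : Prop :=
  if q == 0%N then is_ext_square w else
  [/\ wedge_rels w, q_rels q w c &
  forall (M : lieAlgebra R) (w' : g -> g -> M) (c' : g -> M),
    wedge_rels w' -> q_rels q w' c' ->
    (exists phi : W -> M, [/\ is_lie_hom phi,
        forall h k, phi (w h k) = w' h k & forall h, phi (c h) = c' h]) /\
    (forall phi psi : W -> M, is_lie_hom phi -> is_lie_hom psi ->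
       (forall h k, phi (w h k) = psi (w h k)) ->
       (forall h, phi (c h) = psi (c h)) -> forall z, phi z = psi z)].

Definition q_torsion_free (q : nat) : Prop :=
  q = 0%N \/ forall a : R, a *+ q = 0 -> a = 0.

End Defs.

(* Main.v *)
Require Import Defs.
From HB Require Import structures.
From mathcomp Require Import all_boot all_order all_algebra.
From mathcomp Require Import boolp.
Set Implicit Arguments. Unset Strict Implicit. Unset Printing Implicit Defensive.
Import GRing.Theory.
Local Open Scope ring_scope.


Definition spanP (R : comPzRingType) (L : lmodType R) (T : Type) (g : T -> L) (x : L) : Prop :=
  exists s : seq (R * T), x = \sum_(p <- s) p.1 *: g p.2.
Definition spanb (R : comPzRingType) (L : lmodType R) (T : Type) (g : T -> L) (x : L) : bool :=
  `[< spanP g x >].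

Lemma spanb_closed (R : comPzRingType) (L : lmodType R) (T : Type) (g : T -> L) :
  subsemimod_closed (spanb g).
Proof.
split; [split|].
- by apply/asboolP; exists nil; rewrite big_nil.
- move=> x y /asboolP [s ->] /asboolP [t ->]; apply/asboolP; exists (s ++ t).
  by rewrite big_cat.
- move=> a x /asboolP [s ->]; apply/asboolP.
  exists [seq (a * p.1, p.2) | p <- s]; rewrite big_map scaler_sumr.
  by apply: eq_bigr => p _; rewrite scalerA.
Qed.

HB.instance Definition _ (R : comPzRingType) (L : lmodType R) (T : Type) (g : T -> L) :=
  GRing.isSubmodClosed.Build R L (spanb g) (spanb_closed g).

Inductive spanT (R : comPzRingType) (L : lmodType R) (T : Type) (g : T -> L) : predArgType :=
  SpanT u of spanb g u.
Definition spval (R : comPzRingType) (L : lmodType R) (T : Type) (g : T -> L) (w : spanT g) : L :=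
  let: SpanT u _ := w in u.
HB.instance Definition _ (R : comPzRingType) (L : lmodType R) (T : Type) (g : T -> L) :=
  [isSub of spanT g for @spval R L T g].
HB.instance Definition _ (R : comPzRingType) (L : lmodType R) (T : Type) (g : T -> L) :=
  [Choice of spanT g by <:].
HB.instance Definition _ (R : comPzRingType) (L : lmodType R) (T : Type) (g : T -> L) :=
  [SubChoice_isSubZmodule of spanT g by <:].
HB.instance Definition _ (R : comPzRingType) (L : lmodType R) (T : Type) (g : T -> L) :=
  [SubZmodule_isSubLmodule of spanT g by <:].


Lemma brDl (R : comPzRingType) (L : lieAlgebra R) (x y z : L) :
  [: x + y, z :] = [: x, z :] + [: y, z :].
Proof. by have := lie_brl 1 x y z; rewrite !scale1r. Qed.
Lemma brDr (R : comPzRingType) (L : lieAlgebra R) (x y z : L) :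
  [: z, x + y :] = [: z, x :] + [: z, y :].
Proof. by have := lie_brr 1 x y z; rewrite !scale1r. Qed.
Lemma br0l (R : comPzRingType) (L : lieAlgebra R) (z : L) : [: 0, z :] = 0.
Proof.
have h := brDl 0 0 z; rewrite addr0 in h.
by apply: (@addIr _ [: 0, z :]); rewrite add0r -h.
Qed.
Lemma br0r (R : comPzRingType) (L : lieAlgebra R) (z : L) : [: z, 0 :] = 0.
Proof.
have h := brDr 0 0 z; rewrite addr0 in h.
by apply: (@addIr _ [: z, 0 :]); rewrite add0r -h.
Qed.
Lemma brZl (R : comPzRingType) (L : lieAlgebra R) a (x z : L) :
  [: a *: x, z :] = a *: [: x, z :].
Proof. by have := lie_brl a x 0 z; rewrite !addr0 br0l addr0. Qed.
Lemma brZr (R : comPzRingType) (L : lieAlgebra R) a (x z : L) :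
  [: z, a *: x :] = a *: [: z, x :].
Proof. by have := lie_brr a x 0 z; rewrite !addr0 br0r addr0. Qed.
Lemma brNl (R : comPzRingType) (L : lieAlgebra R) (x z : L) :
  [: - x, z :] = - [: x, z :].
Proof. by rewrite -scaleN1r brZl scaleN1r. Qed.
Lemma brNr (R : comPzRingType) (L : lieAlgebra R) (x z : L) :
  [: z, - x :] = - [: z, x :].
Proof. by rewrite -scaleN1r brZr scaleN1r. Qed.
Lemma brC (R : comPzRingType) (L : lieAlgebra R) (x y : L) :
  [: x, y :] = - [: y, x :].
Proof.
have := lie_alt (x + y); rewrite brDl !brDr !lie_alt add0r addr0.
by move/eqP; rewrite addr_eq0 => /eqP.
Qed.
Lemma br_suml (R : comPzRingType) (L : lieAlgebra R) (I : Type) (s : seq I)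
  (F : I -> L) z : [: \sum_(p <- s) F p, z :] = \sum_(p <- s) [: F p, z :].
Proof.
elim: s => [|a s IH]; first by rewrite !big_nil br0l.
by rewrite !big_cons brDl IH.
Qed.
Lemma br_sumr (R : comPzRingType) (L : lieAlgebra R) (I : Type) (s : seq I)
  (F : I -> L) z : [: z, \sum_(p <- s) F p :] = \sum_(p <- s) [: z, F p :].
Proof.
elim: s => [|a s IH]; first by rewrite !big_nil br0r.
by rewrite !big_cons brDr IH.
Qed.

Definition islin (R : comPzRingType) (U V : lmodType R) (phi : U -> V) :=
  forall (a : R) (x y : U), phi (a *: x + y) = a *: phi x + phi y.
Lemma lin0 (R : comPzRingType) (U V : lmodType R) (phi : U -> V) :
  islin phi -> phi 0 = 0.
Proof.
move=> h; have := h 1 0 0; rewrite !scale1r addr0 => h'.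
by apply: (@addIr _ (phi 0)); rewrite add0r -h'.
Qed.
Lemma linD (R : comPzRingType) (U V : lmodType R) (phi : U -> V) :
  islin phi -> forall x y, phi (x + y) = phi x + phi y.
Proof. by move=> h x y; have := h 1 x y; rewrite !scale1r. Qed.
Lemma linZ (R : comPzRingType) (U V : lmodType R) (phi : U -> V) :
  islin phi -> forall a x, phi (a *: x) = a *: phi x.
Proof. by move=> h a x; have := h a x 0; rewrite !addr0 lin0 // addr0. Qed.
Lemma lin_sum (R : comPzRingType) (U V : lmodType R) (phi : U -> V) (I : Type)
  (s : seq I) (F : I -> U) :
  islin phi -> phi (\sum_(p <- s) F p) = \sum_(p <- s) phi (F p).
Proof.
move=> h; elim: s => [|a s IH]; first by rewrite !big_nil lin0.
by rewrite !big_cons linD // IH.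
Qed.

Lemma span_gen (R : comPzRingType) (L : lmodType R) (T : Type) (g : T -> L) t :
  g t \in spanb g.
Proof.
by apply/asboolP; exists (cons (1, t) nil); rewrite big_cons big_nil scale1r addr0.
Qed.

Lemma span_br (R : comPzRingType) (E : lieAlgebra R) (T : Type) (g : T -> E)
  (hg : forall t t', [: g t, g t' :] \in spanb g) (x y : E) :
  x \in spanb g -> y \in spanb g -> [: x, y :] \in spanb g.
Proof.
move=> /asboolP [s ->] /asboolP [u ->].
rewrite br_suml; apply: rpred_sum => p _; rewrite brZl br_sumr.
apply: rpredZ; apply: rpred_sum => p' _; rewrite brZr; apply: rpredZ; exact: hg.
Qed.

Definition brS (R : comPzRingType) (E : lieAlgebra R) (T : Type) (g : T -> E)
  (hg : forall t t', [: g t, g t' :] \in spanb g) (x y : spanT g) : spanT g :=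
  SpanT (span_br hg (valP x) (valP y)).

Definition spanLie (R : comPzRingType) (E : lieAlgebra R) (T : Type) (g : T -> E)
  (hg : forall t t', [: g t, g t' :] \in spanb g) : lieAlgebra R.
Proof.
refine (@LieAlgebra R (GRing.Lmodule.clone R (spanT g) _) (brS hg) _ _ _ _).
- by move=> a x y z; apply: val_inj; exact: lie_brl.
- by move=> a x y z; apply: val_inj; exact: lie_brr.
- by move=> x; apply: val_inj; exact: lie_alt.
- by move=> x y z; apply: val_inj; exact: lie_jacobi.
Defined.

Lemma ext_span (R : comPzRingType) (f E : lieAlgebra R) (wE : f -> f -> E) :
  is_ext_square wE -> forall e : E, spanP (fun p : f * f => wE p.1 p.2) e.
Proof.
move=> [rels univ] e.
pose g := fun p : f * f => wE p.1 p.2.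
have [r1 [r2 [r3 [r4 [r5 [r6 r11]]]]]] := rels.
have hg : forall t t', [: g t, g t' :] \in spanb g.
  by move=> t t'; rewrite /g r6; exact: (span_gen g ([: t.1, t.2 :], [: t'.1, t'.2 :])).
pose S := spanLie hg.
pose wS (h k : f) : S := SpanT (span_gen g (h, k)).
have HS : wedge_rels wS.
  split; [|split; [|split; [|split; [|split; [|split]]]]].
  - move=> a h k; have [e1 e2] := r1 a h k; split; apply: val_inj; [exact: e1 | exact: e2].
  - by move=> h h' k; apply: val_inj; exact: r2.
  - by move=> h k k'; apply: val_inj; exact: r3.
  - by move=> h h' k; apply: val_inj; exact: r4.
  - by move=> h k k'; apply: val_inj; exact: r5.
  - by move=> h k h' k'; apply: val_inj; exact: r6.
  - by move=> h; apply: val_inj; exact: r11.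
have [[phi [[hl hb] hgen]] _] := univ S wS HS.
have [_ uE] := univ E wE rels.
have hom1 : is_lie_hom (fun x => spval (phi x)).
  split; first by move=> a x y; rewrite hl.
  by move=> x y; rewrite hb.
have hom2 : is_lie_hom (@id E) by [].
have -> : e = spval (phi e).
  symmetry; apply: (uE _ _ hom1 hom2).
  by move=> h k /=; rewrite hgen.
by apply/asboolP; case: (phi e).
Qed.

Lemma aux (V : zmodType) (A B : V) : - A - - - B + A + B = 0.
Proof. by rewrite opprK (addrAC (- A) (- B) A) addNr add0r addNr. Qed.

Lemma jac_sol (V : zmodType) (a b c : V) : a + b + c = 0 -> a = - b - c.
Proof. by move/eqP; rewrite -addrA addr_eq0 => /eqP ->; rewrite opprD. Qed.

Lemma bracket_rels (R : comPzRingType) (f : lieAlgebra R) :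
  wedge_rels (fun h k : f => [: h, k :]).
Proof.
split; [|split; [|split; [|split; [|split; [|split]]]]].
- by move=> a h k; rewrite brZl brZr.
- by move=> h h' k; rewrite brDl.
- by move=> h k k'; rewrite brDr.
- move=> h h' k; rewrite (brC [: h, h' :]) (jac_sol (lie_jacobi k h h')).
  by rewrite (brC h k) brNr opprD !opprK addrC.
- move=> h k k'; rewrite (jac_sol (lie_jacobi h k k')).
  by rewrite (brC [: k', h :]) (brC [: k, h :]) (brC h k) brNr opprK.
- by [].
- exact: lie_alt.
Qed.

Definition brCp (R : comPzRingType) (f E : lieAlgebra R) (wE : f -> f -> E)
  (u v : (E * f)%type) : (E * f)%type := (wE u.2 v.2, [: u.2, v.2 :]).

Lemma wE_antisym (R : comPzRingType) (f E : lieAlgebra R) (wE : f -> f -> E) :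
  wedge_rels wE -> forall a b, wE a b = - wE b a.
Proof.
move=> [_ [r2 [r3 [_ [_ [_ r11]]]]]] a b.
have := r11 (a + b); rewrite r2 !r3 !r11 add0r addr0.
by move/eqP; rewrite addr_eq0 => /eqP.
Qed.

Lemma CL_laws (R : comPzRingType) (f E : lieAlgebra R) (wE : f -> f -> E)
  (rels : wedge_rels wE) :
  let L := GRing.Lmodule.clone R (E * f)%type _ in
  [/\ forall (a : R) (x y z : L), brCp wE (a *: x + y) z = a *: brCp wE x z + brCp wE y z,
      forall (a : R) (x y z : L), brCp wE z (a *: x + y) = a *: brCp wE z x + brCp wE z y,
      forall x : L, brCp wE x x = 0 &
      forall x y z : L, brCp wE x (brCp wE y z) + brCp wE y (brCp wE z x) + brCp wE z (brCp wE x y) = 0].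
Proof.
have [r1 [r2 [r3 [r4 [r5 [r6 r11]]]]]] := rels.
have anti := wE_antisym rels.
split.
- move=> a [x1 x2] [y1 y2] [z1 z2]; rewrite /brCp /=.
  by rewrite r2 -(r1 a x2 z2).1 lie_brl.
- move=> a [x1 x2] [y1 y2] [z1 z2]; rewrite /brCp /=.
  by rewrite r3 -(r1 a z2 x2).2 lie_brr.
- by move=> [x1 x2]; rewrite /brCp /= r11 lie_alt.
- move=> [x1 x2] [y1 y2] [z1 z2]; rewrite /brCp /=.
  change ((wE x2 [: y2, z2 :] + wE y2 [: z2, x2 :] + wE z2 [: x2, y2 :],
    [: x2, [: y2, z2 :] :] + [: y2, [: z2, x2 :] :] + [: z2, [: x2, y2 :] :]) = ((0 : E), (0 : f))).
  rewrite lie_jacobi; congr (_, _).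
  rewrite r5 (anti [: z2, x2 :]) (anti [: y2, x2 :]) (brC y2 x2).
  have -> : wE z2 (- [: x2, y2 :]) = - wE z2 [: x2, y2 :].
    by rewrite -scaleN1r -(r1 _ _ _).2 scaleN1r.
  exact: aux.
Qed.


Definition CLie (R : comPzRingType) (f E : lieAlgebra R) (wE : f -> f -> E)
  (rels : wedge_rels wE) : lieAlgebra R :=
  @LieAlgebra R (GRing.Lmodule.clone R (E * f)%type _) (brCp wE)
    (let: And4 h _ _ _ := CL_laws rels in h)
    (let: And4 _ h _ _ := CL_laws rels in h)
    (let: And4 _ _ h _ := CL_laws rels in h)
    (let: And4 _ _ _ h := CL_laws rels in h).

Theorem lemma6p3 (R : comPzRingType) (q : nat) (X : Type)
    (f : lieAlgebra R) (i : X -> f)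
    (E : lieAlgebra R) (wE : f -> f -> E)
    (W : lieAlgebra R) (wW : f -> f -> W) (c : f -> W)
    (xi : W -> f) (iota : E -> W) :
  q_torsion_free R q ->
  is_free_lie i ->
  is_ext_square wE ->
  is_qext_square q wW c ->
  is_lie_hom xi ->
  (forall x y, xi (wW x y) = [: x, y :]) ->
  ((0 < q)%N -> forall x, xi (c x) = x *+ q) ->
  is_lie_hom iota ->
  (forall x y, iota (wE x y) = wW x y) ->
  (forall e e' : E, xi (iota e) = xi (iota e') -> iota e = iota e') /\
  (forall z : f, in_derived z <-> exists e : E, xi (iota e) = z).
Proof.
move=> _ hfree hE _ [xl xb] hxiw _ [il ib] hiotaw.
have rels := hE.1.
have [[d [[dl db] dgen]] uE] := hE.2 f _ (bracket_rels f).
have hxd : forall e, xi (iota e) = d e.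
  apply: uE.
  - by split; [move=> a x y; rewrite il xl | move=> x y; rewrite ib xb].
  - by split.
  - by move=> h k; rewrite hiotaw hxiw dgen.
pose C := CLie rels.
have [[s [[sl sb] sgen]] _] := hfree C (fun x => ((0 : E), i x)).
have [_ uf] := hfree f i.
have hs2 : forall x, (s x).2 = x.
  apply: (uf (fun x => (s x).2) id).
  - split; first by move=> a x y; rewrite sl.
    by move=> x y; rewrite sb.
  - by [].
  - by move=> x; rewrite sgen.
pose sig x := (s x).1.
have sigbr : forall x y, sig [: x, y :] = wE x y.
  by move=> x y; rewrite /sig sb /= /brCp /= !hs2.
have sigl : islin sig by move=> a x y; rewrite /sig sl.
have dl' : islin d := dl.
have hsd : forall e, sig (d e) = e.
  move=> e; have [t ->] := ext_span hE e.
  rewrite lin_sum // lin_sum //; apply: eq_bigr => p _.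
  by rewrite linZ // dgen linZ // sigbr.
split.
- by move=> e e'; rewrite !hxd => h; rewrite -(hsd e) h hsd.
- move=> z; split.
  + move=> [t ->]; exists (\sum_(p <- t) wE p.1 p.2).
    by rewrite hxd lin_sum //; apply: eq_bigr => p _; rewrite dgen.
  + move=> [e <-]; rewrite hxd; have [t ->] := ext_span hE e.
    exists [seq (p.1 *: p.2.1, p.2.2) | p <- t].
    rewrite big_map lin_sum //; apply: eq_bigr => p _ /=.
    by rewrite linZ // dgen brZl.
Qed.
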